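(* Let $m\in\mathbb N$. For all $\varepsilon_1,\dots,\varepsilon_m\in\{\pm1\}$ and $i_1,\dots,i_m\in\mathbb N$, $$\varepsilon_1\eta^{i_1}+\dots+\varepsilon_m\eta^{i_m}=0\quad\text{implies}\quad \varepsilon_1a_{i_1}+\dots+\varepsilon_ma_{i_m}=0.$$
   Context: Standing setting: $d\in\mathbb N$; $\lambda_1,\dots,\lambda_d\in\mathbb C$ are the roots of an irreducible polynomial of degree $d$ with integer coefficients; $c_1,\dots,c_d\in\mathbb C$; the dominant root condition holds: $\lambda_1$ is real, $\lambda_1>1$, $\lambda_1>\max\{|\lambda_2|,\dots,|\lambda_d|\}$, $c_1\ne0$; $a_n=c_1\lambda_1^n+\dots+c_d\lambda_d^n$ is a positive integer for every $n\in\mathbb N$; and $\eta:=\lambda_1$. *)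

(* Defs.v *)
From HB Require Import structures.
From mathcomp Require Import all_boot all_order all_algebra.
From mathcomp Require Import reals complex.
Set Implicit Arguments. Unset Strict Implicit. Unset Printing Implicit Defensive.
Import Order.TTheory GRing.Theory Num.Theory.
Local Open Scope ring_scope.

(* The linear recurrence sequence a_n = c_1 lam_1^n + ... + c_d lam_d^n,
   with 0-based indices: lam 0 = lambda_1, ..., lam (d-1) = lambda_d. *)
Definition lrs (R : realType) (d : nat) (c lam : nat -> R[i]) (n : nat) : R[i] :=
  \sum_(j < d) c j * lam j ^+ n.

(* Main.v *)
Require Import Defs.
From HB Require Import structures.
From mathcomp Require Import all_boot all_order all_algebra.
From mathcomp Require Import reals complex.
Import Order.TTheory GRing.Theory Num.Theory.
Local Open Scope ring_scope.

Theorem lemma6p2 (R : realType) (d : nat) (lam c : nat -> R[i]) (p : {poly int})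
  (hd : (0 < d)%N)
  (hdeg : size p = d.+1)
  (hirr : irreducible_poly (map_poly (intr : int -> rat) p))
  (hroots : map_poly (intr : int -> R[i]) p
            = (lead_coef p)%:~R *: \prod_(j < d) ('X - (lam j)%:P))
  (hreal : lam 0%N \is Num.real)
  (hgt1 : 1 < lam 0%N)
  (hdom : forall j : nat, (0 < j < d)%N -> `|lam j| < lam 0%N)
  (hc : c 0%N != 0)
  (hpos : forall n : nat, exists k : nat, (0 < k)%N /\ lrs d c lam n = k%:R)
  (m : nat) (eps : 'I_m -> int) (idx : 'I_m -> nat)
  (heps : forall k : 'I_m, eps k = 1 \/ eps k = -1)
  (hsum : \sum_(k < m) (eps k)%:~R * lam 0%N ^+ idx k = 0) :
  \sum_(k < m) (eps k)%:~R * lrs d c lam (idx k) = 0.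
Proof.
set Qz : {poly int} := \sum_(k < m) (eps k)%:P * 'X^(idx k).
have QE : forall x : R[i], (map_poly (intr : int -> R[i]) Qz).[x]
    = \sum_(k < m) (eps k)%:~R * x ^+ idx k.
  move=> x; rewrite /Qz rmorph_sum horner_sum; apply: eq_bigr => k _.
  by rewrite rmorphM /= map_polyC map_polyXn hornerCM hornerXn.
have mapE : forall q : {poly int},
    map_poly (ratr : rat -> R[i]) (map_poly (intr : int -> rat) q)
    = map_poly (intr : int -> R[i]) q.
  by move=> q; rewrite -map_poly_comp; apply: eq_map_poly => z /=; rewrite ratr_int.
have rootp : forall j : 'I_d, root (map_poly (intr : int -> R[i]) p) (lam j).
  move=> j; apply/rootP; rewrite hroots hornerZ horner_prod (bigD1 j) //=.
  by rewrite hornerXsubC subrr mul0r mulr0.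
have dv : map_poly (intr : int -> rat) p %| map_poly (intr : int -> rat) Qz.
  have [hs hq] := hirr.
  set g := gcdp (map_poly (intr : int -> rat) p) (map_poly (intr : int -> rat) Qz).
  have [/eqP s1|s1] := eqVneq (size g) 1%N.
    have cop : coprimep (map_poly (intr : int -> rat) p)
                        (map_poly (intr : int -> rat) Qz).
      by rewrite /coprimep -/g s1.
    rewrite -(coprimep_map (ratr : {rmorphism rat -> R[i]})) !mapE in cop.
    have := coprimep_root cop (rootp (Ordinal hd)).
    by rewrite QE /= hsum eqxx.
  by rewrite -(eqp_dvdl _ (hq g s1 (dvdp_gcdl _ _))) dvdp_gcdr.
rewrite -(dvdp_map (ratr : {rmorphism rat -> R[i]})) !mapE in dv.
have rQ : forall j : 'I_d, \sum_(k < m) (eps k)%:~R * lam j ^+ idx k = 0.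
  by move=> j; rewrite -QE; apply/rootP; apply: root_dvdp dv (rootp j).
rewrite /lrs.
under eq_bigr => k _ do rewrite mulr_sumr.
rewrite exchange_big /= big1 // => j _.
transitivity (c j * \sum_(k < m) (eps k)%:~R * lam j ^+ idx k); last by rewrite rQ mulr0.
rewrite mulr_sumr; apply: eq_bigr => k _.
by rewrite mulrCA.
Qed.
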